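(* Let $G$ be a finite $3$-group of nilpotency class at most $3$ such that $G/Z(G)$ is powerful. Then $\exp \Omega_{1}(G)\le 3$.
   Context: A finite $3$-group $Q$ is powerful if $[Q,Q]\le Q^{3}=\langle q^3\mid q\in Q\rangle$. $\Omega_{1}(G)=\langle g\in G\mid g^{3}=1\rangle$. *)

(* Defs.v *)
From mathcomp Require Import all_boot all_fingroup all_solvable.
Set Implicit Arguments.
Unset Strict Implicit.
Unset Printing Implicit Defensive.
Local Open Scope group_scope.

Definition cube_subgroup (gT : finGroupType) (Q : {set gT}) : {set gT} :=
  <<[set x ^+ 3 | x in Q]>>.

Definition powerful3 (gT : finGroupType) (Q : {set gT}) : bool :=
  [~: Q, Q] \subset cube_subgroup Q.

Definition Omega1_3 (gT : finGroupType) (G : {set gT}) : {set gT} :=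
  <<[set g in G | g ^+ 3 == 1]>>.

(* Main.v *)
Require Import Defs.
From mathcomp Require Import all_boot all_fingroup all_solvable.
Local Open Scope group_scope.

Section Aux.
Variable gT : finGroupType.
Implicit Types G : {group gT}.

Lemma L3_central G : 'L_4(G) = 1 ->
  forall u h, u \in 'L_3(G) -> h \in G -> commute u h.
Proof.
move=> L4 u h Lu Gh; apply/commgP.
have : [~ u, h] \in 'L_4(G) by rewrite lcnSn; apply: mem_commg.
by rewrite L4 inE.
Qed.

Lemma key G : 'L_4(G) = 1 -> forall g x, g \in G -> x \in G -> x ^+ 3 = 1 ->
  commute (g ^+ 3) x.
Proof.
move=> L4 g x Gg Gx x3.
have cen := L3_central G L4.
have L2c a b : a \in G -> b \in G -> [~ a, b] \in 'L_2(G) by move=> *; apply: mem_commg.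
have L3c a b : a \in 'L_2(G) -> b \in G -> [~ a, b] \in 'L_3(G)
  by move=> *; rewrite lcnSn; apply: mem_commg.
set c' := [~ x, g].
have Lc' : c' \in 'L_2(G) by apply: L2c.
have e1 : commute c' [~ c', x].
  apply: commute_sym; apply: (cen _ _ (L3c _ _ Lc' Gx)).
  exact: (subsetP (lcn_sub _ _)) Lc'.
have e2 : commute x [~ c', x] by apply: commute_sym; apply: cen (L3c _ _ Lc' Gx) Gx.
have h1 := expMg_Rmul 3 e1 e2.
rewrite -conjg_mulR -conjXg x3 conj1g -(commgX 3 e2) x3 commg1 mulg1 in h1.
have c'3 : c' ^+ 3 = 1 by move: h1; rewrite mul1g => <-.
set c := [~ g, x].
have cc : c = c'^-1 by rewrite /c /c' invgR.
have c3 : c ^+ 3 = 1 by rewrite cc expgVn c'3 invg1.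
have Lc : c \in 'L_2(G) by apply: L2c.
have f1 : commute c [~ c, g].
  apply: commute_sym; apply: (cen _ _ (L3c _ _ Lc Gg)).
  exact: (subsetP (lcn_sub _ _)) Lc.
have f2 : commute g [~ c, g] by apply: commute_sym; apply: cen (L3c _ _ Lc Gg) Gg.
have h2 := expMg_Rmul 3 f1 f2.
rewrite -conjg_mulR -(commXg 3 f1) c3 comm1g mulg1 mulg1 -conjXg in h2.
by apply/commgP; rewrite -conjg_fix h2.
Qed.

End Aux.

Theorem lemma4p4 (gT : finGroupType) (G : {group gT}) :
  pgroup 3 G -> (nil_class G <= 3)%N -> powerful3 (G / 'Z(G))%g ->
  (exponent (Omega1_3 G) <= 3)%N.
Proof.
move=> pG cl pw.
have L4 : 'L_4(G) = 1 by apply/(lcn_nil_classP 3 (pgroup_nil pG)).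
have nZG : G \subset 'N('Z(G)) by case/andP: (center_normal G).
have sRG : [~: G, G] \subset G by apply: (lcn_sub 2 G).
have RC x : x \in G -> x ^+ 3 = 1 -> [~: G, G] \subset 'C_G[x].
  move=> Gx x3.
  have sZK : 'Z(G) \subset 'C_G[x].
    apply/subsetP => z /centerP [Gz cz]; rewrite inE Gz; apply/cent1P.
    by apply: cz.
  rewrite -(quotientSGK (subset_trans sRG nZG) sZK) quotientR //.
  apply: (subset_trans pw); rewrite /cube_subgroup gen_subG.
  apply/subsetP => _ /imsetP [X XG ->].
  case/morphimP: XG => g Ng Gg ->.
  rewrite -morphX //; apply: mem_quotient.
  rewrite inE groupX //; apply/cent1P.
  exact: (@key gT G L4 g x Gg Gx x3).
pose S := [set g in G | g ^+ 3 == 1].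
have gS : group_set S.
  apply/group_setP; split; first by rewrite inE group1 expg1n eqxx.
  move=> x y; rewrite !inE => /andP [Gx /eqP x3] /andP [Gy /eqP y3].
  rewrite groupM //=.
  have Rc : [~ y, x] \in [~: G, G] by apply: mem_commg.
  have cx : commute x [~ y, x].
    by have := subsetP (RC x Gx x3) _ Rc; rewrite inE => /andP [_ /cent1P].
  have cy : commute y [~ y, x].
    by have := subsetP (RC y Gy y3) _ Rc; rewrite inE => /andP [_ /cent1P].
  rewrite (expMg_Rmul 3 cy cx) x3 y3 -(commgX 3 cx) x3 commg1 !mulg1 //.
have -> : Omega1_3 G = S by rewrite /Omega1_3 -/S -[S]/(gval (Group gS)) genGid.
apply: dvdn_leq => //; apply/exponentP => z; rewrite inE => /andP [_ /eqP //].
Qed.
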